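(* Let $X$ be a real Hilbert space, $C\subseteq X$ a closed convex set, $T:C\to C$ a nonexpansive map, $x_0\in C$, and let $p\in C$ be a fixed point of $T$. Let $N\in\mathbb{N}\setminus\{0\}$ satisfy $N\geq 2\|x_0-p\|$. Then for every $k\in\mathbb{N}$ and every monotone function $f:\mathbb{N}\to\mathbb{N}$ there exist $n\in\mathbb{N}$ with $n\leq f^{(r)}(0)$, where $r:=N^2(k+1)$, and $x\in C\cap B_N$ such that $$\|T(x)-x\|\leq \frac{1}{f(n)+1}$$ and $$\forall y\in C\cap B_N\ \left(\|T(y)-y\|\leq \frac{1}{n+1}\ \to\ \|x-x_0\|^2\leq \|y-x_0\|^2+\frac{1}{k+1}\right).$$
   Context: $B_N:=\{x\in X:\ \|x-p\|\leq N\}$ denotes the closed ball of radius $N$ centered at the fixed point $p$. A function $f:\mathbb{N}\to\mathbb{N}$ is called monotone if $f(n)\leq f(n+1)$ for all $n\in\mathbb{N}$. $f^{(r)}$ denotes the $r$-fold composition of $f$ with itself ($f^{(0)}$ is the identity). A map $T$ is nonexpansive if $\|T(x)-T(y)\|\leq\|x-y\|$ for all $x,y$. *)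

(* Defs.v *)
From Stdlib Require Import Reals Lra.
Open Scope R_scope.

Record HilbertSpace := {
  hcar :> Type;
  hzero : hcar;
  hadd : hcar -> hcar -> hcar;
  hopp : hcar -> hcar;
  hscal : R -> hcar -> hcar;
  hinner : hcar -> hcar -> R;
  hadd_assoc : forall x y z, hadd x (hadd y z) = hadd (hadd x y) z;
  hadd_comm : forall x y, hadd x y = hadd y x;
  hadd_zero : forall x, hadd x hzero = x;
  hadd_opp : forall x, hadd x (hopp x) = hzero;
  hscal_one : forall x, hscal 1 x = x;
  hscal_assoc : forall a b x, hscal a (hscal b x) = hscal (a * b) x;
  hscal_distr_l : forall a x y, hscal a (hadd x y) = hadd (hscal a x) (hscal a y);
  hscal_distr_r : forall a b x, hscal (a + b) x = hadd (hscal a x) (hscal b x);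
  hinner_sym : forall x y, hinner x y = hinner y x;
  hinner_add_l : forall x y z, hinner (hadd x y) z = hinner x z + hinner y z;
  hinner_scal_l : forall a x y, hinner (hscal a x) y = a * hinner x y;
  hinner_pos : forall x, 0 <= hinner x x;
  hinner_def : forall x, hinner x x = 0 -> x = hzero;
  hcomplete : forall u : nat -> hcar,
    (forall eps, eps > 0 -> exists M, forall m n, (m >= M)%nat -> (n >= M)%nat ->
       sqrt (hinner (hadd (u m) (hopp (u n))) (hadd (u m) (hopp (u n)))) < eps) ->
    exists l, forall eps, eps > 0 -> exists M, forall n, (n >= M)%nat ->
       sqrt (hinner (hadd (u n) (hopp l)) (hadd (u n) (hopp l))) < eps
}.

Arguments hzero {h}.
Arguments hadd {h}.
Arguments hopp {h}.
Arguments hscal {h}.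
Arguments hinner {h}.

Definition hsub {X : HilbertSpace} (x y : X) : X := hadd x (hopp y).
Definition hnorm {X : HilbertSpace} (x : X) : R := sqrt (hinner x x).

Definition hconverges {X : HilbertSpace} (u : nat -> X) (l : X) : Prop :=
  forall eps, eps > 0 -> exists M, forall n, (n >= M)%nat -> hnorm (hsub (u n) l) < eps.

(* C is (sequentially, equivalently topologically in a metric space) closed *)
Definition is_closed {X : HilbertSpace} (C : X -> Prop) : Prop :=
  forall (u : nat -> X) (l : X), (forall n, C (u n)) -> hconverges u l -> C l.

Definition is_convex {X : HilbertSpace} (C : X -> Prop) : Prop :=
  forall x y t, C x -> C y -> 0 <= t <= 1 -> C (hadd (hscal t x) (hscal (1 - t) y)).

Definition maps_into {X : HilbertSpace} (C : X -> Prop) (T : X -> X) : Prop :=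
  forall x, C x -> C (T x).

Definition nonexpansive_on {X : HilbertSpace} (C : X -> Prop) (T : X -> X) : Prop :=
  forall x y, C x -> C y -> hnorm (hsub (T x) (T y)) <= hnorm (hsub x y).

Definition ball {X : HilbertSpace} (p : X) (N : R) (x : X) : Prop :=
  hnorm (hsub x p) <= N.

Definition monotone (f : nat -> nat) : Prop := forall n, (f n <= f (S n))%nat.

Definition iter_fun (f : nat -> nat) (r : nat) : nat -> nat := Nat.iter r f.

(* Main.v *)
Require Import Defs.
From Stdlib Require Import Reals Lra Lia Classical.
Open Scope R_scope.

Lemma inner_zero_l {X : HilbertSpace} (w : X) : hinner hzero w = 0.
Proof.
  pose proof (hinner_add_l X hzero hzero w) as H.
  rewrite hadd_zero in H. lra.
Qed.

Lemma hnorm_sym {X : HilbertSpace} (a b : X) : hnorm (hsub a b) = hnorm (hsub b a).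
Proof.
  unfold hnorm. set (v := hsub b a). set (w := hsub a b).
  assert (Hvw : hadd v w = hzero).
  { unfold v, w, hsub.
    rewrite hadd_assoc.
    rewrite <- (hadd_assoc X b (hopp a) a).
    rewrite (hadd_comm X (hopp a) a), hadd_opp, hadd_zero, hadd_opp. reflexivity. }
  pose proof (hinner_add_l X v w w) as H1. rewrite Hvw, inner_zero_l in H1.
  pose proof (hinner_add_l X v w v) as H2. rewrite Hvw, inner_zero_l in H2.
  rewrite (hinner_sym X w v) in H2.
  f_equal. lra.
Qed.

Lemma hnorm_zero {X : HilbertSpace} (a : X) : hnorm (hsub a a) = 0.
Proof.
  unfold hnorm, hsub. rewrite hadd_opp, inner_zero_l. apply sqrt_0.
Qed.

Lemma mono_le (f : nat -> nat) : monotone f -> forall a b, (a <= b)%nat -> (f a <= f b)%nat.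
Proof.
  intros Hm a b Hab. induction Hab. lia. specialize (Hm m). lia.
Qed.

Lemma iter_mono (f : nat -> nat) : monotone f ->
  forall i j, (i <= j)%nat -> (iter_fun f i 0 <= iter_fun f j 0)%nat.
Proof.
  intros Hm.
  assert (Hs : forall i, (iter_fun f i 0 <= iter_fun f (S i) 0)%nat).
  { induction i. simpl. lia. unfold iter_fun in *. simpl. apply mono_le; auto. }
  intros i j Hij. induction Hij. lia. specialize (Hs m). lia.
Qed.

Theorem mainTheorem1 (X : HilbertSpace) (C : X -> Prop) (T : X -> X) (x0 p : X)
  (N : nat)
  (hC_closed : is_closed C) (hC_convex : is_convex C)
  (hT_maps : maps_into C T) (hT_ne : nonexpansive_on C T)
  (hx0 : C x0) (hp : C p) (hfix : T p = p)
  (hN0 : (N <> 0)%nat) (hN : INR N >= 2 * hnorm (hsub x0 p)) :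
  forall (k : nat) (f : nat -> nat), monotone f ->
    exists (n : nat) (x : X),
      (n <= iter_fun f (N * N * (k + 1)) 0)%nat /\
      C x /\ ball p (INR N) x /\
      hnorm (hsub (T x) x) <= 1 / (INR (f n) + 1) /\
      (forall y : X, C y -> ball p (INR N) y ->
         hnorm (hsub (T y) y) <= 1 / (INR n + 1) ->
         (hnorm (hsub x x0))^2 <= (hnorm (hsub y x0))^2 + 1 / (INR k + 1)).
Proof.
  intros k f Hm.
  set (r := (N * N * (k + 1))%nat).
  set (d := 1 / (INR k + 1)).
  apply NNPP. intro Hneg.
  assert (Hstep : forall n, (n <= iter_fun f r 0)%nat -> forall x, C x -> ball p (INR N) x ->
     hnorm (hsub (T x) x) <= 1 / (INR (f n) + 1) ->
     exists y, C y /\ ball p (INR N) y /\ hnorm (hsub (T y) y) <= 1 / (INR n + 1) /\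
       (hnorm (hsub y x0))^2 + d < (hnorm (hsub x x0))^2).
  { intros n Hn x Cx Bx Dx. apply NNPP. intro H2. apply Hneg.
    exists n, x. repeat split; auto.
    intros y Cy By Dy.
    destruct (Rle_dec ((hnorm (hsub x x0))^2) ((hnorm (hsub y x0))^2 + d)) as [Hle|Hgt];
      [exact Hle|].
    exfalso. apply H2. exists y. repeat split; auto. lra. }
  assert (Hind : forall j, (j <= r)%nat -> exists y, C y /\ ball p (INR N) y /\
     hnorm (hsub (T y) y) <= 1 / (INR (iter_fun f (r - j) 0) + 1) /\
     (hnorm (hsub y x0))^2 <= (hnorm (hsub p x0))^2 - INR j * d).
  { induction j; intros Hj.
    - exists p. repeat split; auto.
      + unfold ball. rewrite hnorm_zero. apply pos_INR.
      + rewrite hfix, hnorm_zero. unfold Rdiv. rewrite Rmult_1_l.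
        left. apply Rinv_0_lt_compat. pose proof (pos_INR (iter_fun f (r - 0) 0)). lra.
      + simpl. lra.
    - destruct IHj as [x [Cx [Bx [Dx Px]]]]. lia.
      assert (E : (r - j = S (r - S j))%nat) by lia.
      rewrite E in Dx. unfold iter_fun in Dx. simpl in Dx. fold (iter_fun f (r - S j) 0) in Dx.
      destruct (Hstep (iter_fun f (r - S j) 0)) with x as [y [Cy [By [Dy Py]]]]; auto.
      apply iter_mono; auto. lia.
      exists y. repeat split; auto. rewrite S_INR. lra. }
  destruct (Hind r (le_n r)) as [y [_ [_ [_ Py]]]].
  assert (Hr : INR r * d = INR N * INR N).
  { unfold r, d. rewrite !mult_INR, plus_INR. simpl (INR 1).
    field. pose proof (pos_INR k). lra. }
  rewrite Hr in Py.
  rewrite (hnorm_sym p x0) in Py.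
  pose proof (pos_INR N) as HN.
  assert (HN1 : INR N >= 1). { destruct N. lia. rewrite S_INR. pose proof (pos_INR N). lra. }
  assert (Hnn : 0 <= hnorm (hsub x0 p)) by (unfold hnorm; apply sqrt_pos).
  assert (0 <= (hnorm (hsub y x0))^2) by (apply pow2_ge_0).
  assert (hnorm (hsub x0 p) ^ 2 <= INR N * INR N / 4).
  { assert (hnorm (hsub x0 p) <= INR N / 2) by lra.
    simpl. rewrite Rmult_1_r. nra. }
  assert (INR N * INR N >= 1) by nra.
  lra.
Qed.
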